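(* Let $X$ be a Tychonoff space such that every compact subset of $X$ is countable. If $C_c(X)$ is a weakly $\aleph$-space, then $X$ is separable. In particular, $C_c([0,\omega_1))$ is not a weakly $\aleph$-space, where $[0,\omega_1)$ is the space of countable ordinals with the order topology.
   Context: $C_c(X)$ is the space of continuous real functions on $X$ with the compact-open topology. A $k$-network is a family $\mathcal N$ such that whenever $K\subset U$ with $K$ compact and $U$ open, there is a finite $\mathcal F\subset\mathcal N$ with $K\subset\bigcup\mathcal F\subset U$; an $\aleph$-space is a regular space with a $\sigma$-locally finite $k$-network; a locally convex space $E$ is a weakly $\aleph$-space if $(E,\sigma(E,E'))$ is an $\aleph$-space. *)

(* Defs.v *)
From Stdlib Require Import Reals List Classical.
Open Scope R_scope.
Set Implicit Arguments.

Definition set (T : Type) := T -> Prop.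
Definition fam (T : Type) := set T -> Prop.
Definition subset {T : Type} (A B : set T) : Prop := forall x, A x -> B x.
Definition union_list {T : Type} (l : list (set T)) : set T :=
  fun x => exists A, In A l /\ A x.

Record is_topology {T : Type} (op : fam T) : Prop := {
  top_full : op (fun _ => True);
  top_inter : forall U V, op U -> op V -> op (fun x => U x /\ V x);
  top_union : forall F : fam T, (forall U, F U -> op U) ->
                op (fun x => exists U, F U /\ U x) }.

Definition R_open (U : set R) : Prop :=
  forall x, U x -> exists e, 0 < e /\ forall y, Rabs (y - x) < e -> U y.

Definition continuous {T S : Type} (opT : fam T) (opS : fam S) (f : T -> S) :=
  forall V, opS V -> opT (fun x => V (f x)).

Definition compact {T : Type} (op : fam T) (K : set T) : Prop :=
  forall F : fam T, (forall U, F U -> op U) ->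
    subset K (fun x => exists U, F U /\ U x) ->
    exists l : list (set T), (forall U, In U l -> F U) /\ subset K (union_list l).

Definition closed {T : Type} (op : fam T) (A : set T) := op (fun x => ~ A x).
Definition closure {T : Type} (op : fam T) (A : set T) : set T :=
  fun x => forall U, op U -> U x -> exists y, U y /\ A y.

Definition T1 {T : Type} (op : fam T) := forall x : T, closed op (fun y => y = x).

Definition completely_regular {T : Type} (op : fam T) :=
  forall (F : set T) (x : T), closed op F -> ~ F x ->
    exists f : T -> R, continuous op R_open f /\ f x = 0 /\ forall y, F y -> f y = 1.

Definition tychonoff {T : Type} (op : fam T) :=
  is_topology op /\ T1 op /\ completely_regular op.

Definition countable {T : Type} (A : set T) : Prop :=
  exists g : nat -> option T, forall x, A x -> exists n, g n = Some x.

Definition dense {T : Type} (op : fam T) (D : set T) :=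
  forall U, op U -> (exists x, U x) -> exists x, U x /\ D x.

Definition separable {T : Type} (op : fam T) :=
  exists D : set T, countable D /\ dense op D.

Definition generated {T : Type} (S : fam T) : fam T :=
  fun U => forall x, U x -> exists l : list (set T),
    (forall A, In A l -> S A) /\ (forall A, In A l -> A x) /\
    subset (fun y => forall A, In A l -> A y) U.

Definition Cfun {X : Type} (opX : fam X) :=
  { f : X -> R | continuous opX R_open f }.

Definition compact_open {X : Type} (opX : fam X) : fam (Cfun opX) :=
  generated (fun A => exists (K : set X) (V : set R),
    compact opX K /\ R_open V /\
    A = (fun f : Cfun opX => forall x, K x -> V (proj1_sig f x))).

Definition linear_functional {X : Type} (opX : fam X) (phi : Cfun opX -> R) :=
  (forall f g h : Cfun opX,
     (forall x, proj1_sig h x = proj1_sig f x + proj1_sig g x) ->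
     phi h = phi f + phi g) /\
  (forall (a : R) (f h : Cfun opX),
     (forall x, proj1_sig h x = a * proj1_sig f x) -> phi h = a * phi f).

Definition in_dual {X : Type} (opX : fam X) (phi : Cfun opX -> R) :=
  linear_functional (opX:=opX) phi /\ continuous (@compact_open X opX) R_open phi.

Definition weak_top {X : Type} (opX : fam X) : fam (Cfun opX) :=
  generated (fun A => exists (phi : Cfun opX -> R) (V : set R),
    in_dual (opX:=opX) phi /\ R_open V /\ A = (fun f => V (phi f))).

Definition regular {T : Type} (op : fam T) :=
  T1 op /\
  forall (x : T) (U : set T), op U -> U x ->
    exists V, op V /\ V x /\ subset (closure op V) U.

Definition locally_finite {T : Type} (op : fam T) (N : fam T) :=
  forall x : T, exists U, op U /\ U x /\
    exists l : list (set T), forall A, N A -> (exists y, U y /\ A y) -> In A l.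

Definition sigma_locally_finite {T : Type} (op : fam T) (N : fam T) :=
  exists Nn : nat -> fam T,
    (forall A, N A <-> exists n, Nn n A) /\ forall n, locally_finite op (Nn n).

Definition k_network {T : Type} (op : fam T) (N : fam T) :=
  forall K U, compact op K -> op U -> subset K U ->
    exists l : list (set T), (forall A, In A l -> N A) /\
      subset K (union_list l) /\ subset (union_list l) U.

Definition aleph_space {T : Type} (op : fam T) :=
  is_topology op /\ regular op /\
  exists N : fam T, sigma_locally_finite op N /\ k_network op N.

Definition weakly_aleph {X : Type} (opX : fam X) := aleph_space (@weak_top X opX).

(* (W, lt) is order-isomorphic to [0, omega_1): a strict well-order that is
   uncountable, all of whose proper initial segments are countable. *)
Definition is_omega1 {W : Type} (lt : W -> W -> Prop) :=
  (forall x, ~ lt x x) /\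
  (forall x y z, lt x y -> lt y z -> lt x z) /\
  (forall x y, lt x y \/ x = y \/ lt y x) /\
  well_founded lt /\
  ~ countable (fun _ : W => True) /\
  (forall x, countable (fun y => lt y x)).

Definition order_topology {W : Type} (lt : W -> W -> Prop) : fam W :=
  generated (fun A => exists a, A = (fun y => lt y a) \/ A = (fun y => lt a y)).

(* Main.v *)
From Stdlib Require Import Reals Lra List Classical ClassicalEpsilon FunctionalExtensionality PropExtensionality Cantor.
Require Import Defs.
Open Scope R_scope.

Definition cid := constructive_indefinite_description.

Lemma countable_Union {T : Type} (P : nat -> set T) :
  (forall n, countable (P n)) -> countable (fun x => exists n, P n x).
Proof.
  intros H.
  pose (G := fun n => proj1_sig (cid _ _ (H n))).
  exists (fun m => let p := Cantor.of_nat m in G (fst p) (snd p)).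
  intros x [n Hx].
  destruct (proj2_sig (cid _ _ (H n)) x Hx) as [k Hk].
  exists (Cantor.to_nat (n, k)). rewrite Cantor.cancel_of_to. simpl. exact Hk.
Qed.

Lemma countable_sub {T : Type} (A B : set T) : countable B -> subset A B -> countable A.
Proof. intros [g Hg] S. exists g. intros x Hx. apply Hg, S, Hx. Qed.

Lemma countable_empty {T : Type} (A : set T) : (forall x, ~ A x) -> countable A.
Proof. intros H. exists (fun _ => None). intros x Hx. exfalso. exact (H x Hx). Qed.

Lemma countable_addpt {T : Type} (A : set T) (d : T) : countable A -> countable (fun x => x = d \/ A x).
Proof.
  intros [g Hg]. exists (fun n => match n with O => Some d | S k => g k end).
  intros x [->|Hx]. exists O; reflexivity. destruct (Hg x Hx) as [k Hk]. exists (S k). exact Hk.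
Qed.

Lemma op_ext {T : Type} (op : fam T) (A B : set T) : op A -> (forall x, A x <-> B x) -> op B.
Proof.
  intros HA H. replace B with A; auto.
  apply functional_extensionality. intros x. apply propositional_extensionality. apply H.
Qed.

Lemma generated_top {T : Type} (S : fam T) : is_topology (generated S).
Proof.
  split.
  - intros x _. exists nil. repeat split; simpl; tauto.
  - intros U V HU HV x [Ux Vx].
    destruct (HU x Ux) as [l1 [A1 [B1 C1]]]. destruct (HV x Vx) as [l2 [A2 [B2 C2]]].
    exists (l1 ++ l2). repeat split.
    + intros A HA. apply in_app_or in HA. destruct HA; [apply A1|apply A2]; auto.
    + intros A HA. apply in_app_or in HA. destruct HA; [apply B1|apply B2]; auto.
    + apply C1. intros A HA. apply H. apply in_or_app; auto.
    + apply C2. intros A HA. apply H. apply in_or_app; auto.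
  - intros F HF x [U [FU Ux]].
    destruct (HF U FU x Ux) as [l [A1 [B1 C1]]]. exists l. repeat split; auto.
    intros y Hy. exists U. split; auto.
Qed.

Lemma top_empty {T : Type} (op : fam T) : is_topology op -> op (fun _ => False).
Proof.
  intros Ht. apply op_ext with (fun x => exists U, (fun _ : set T => False) U /\ U x).
  apply (top_union Ht). intros U []. intros x; split. intros [U [[] _]]. intros [].
Qed.

Lemma cont_const {T : Type} (op : fam T) (c : R) : is_topology op -> continuous op R_open (fun _ => c).
Proof.
  intros Ht V HV. destruct (classic (V c)) as [H|H].
  - apply op_ext with (fun _ => True). apply (top_full Ht). intros x; tauto.
  - apply op_ext with (fun _ => False). apply top_empty; auto. intros x; tauto.
Qed.

Lemma cont_comp {T : Type} (op : fam T) (f : T -> R) (u : R -> R) :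
  continuous op R_open f -> (forall V, R_open V -> R_open (fun y => V (u y))) ->
  continuous op R_open (fun x => u (f x)).
Proof. intros Hf Hu V HV. apply (Hf _ (Hu V HV)). Qed.

Lemma u_scale (t : R) : forall V, R_open V -> R_open (fun y => V (t * y)).
Proof.
  intros V HV y Hy. destruct (HV _ Hy) as [e [He H]].
  exists (e / (Rabs t + 1)). split.
  - apply Rdiv_lt_0_compat; auto. pose proof (Rabs_pos t); lra.
  - intros z Hz. apply H. replace (t * z - t * y) with (t * (z - y)) by ring.
    rewrite Rabs_mult. pose proof (Rabs_pos t). pose proof (Rabs_pos (z - y)).
    assert (Rabs (z - y) * (Rabs t + 1) < e).
    { apply Rmult_lt_compat_r with (r := Rabs t + 1) in Hz; [|lra].
      unfold Rdiv in Hz. rewrite Rmult_assoc, Rinv_l in Hz by lra. lra. }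
    nra.
Qed.

Lemma u_shift (c : R) : forall V, R_open V -> R_open (fun y => V (y - c)).
Proof.
  intros V HV y Hy. destruct (HV _ Hy) as [e [He H]].
  exists e. split; auto. intros z Hz. apply H. replace (z - c - (y - c)) with (z - y) by ring. auto.
Qed.


Definition zeroC {X : Type} (opX : fam X) (Ht : is_topology opX) : Cfun opX :=
  exist _ (fun _ => 0) (cont_const opX 0 Ht).

Definition scaleC {X : Type} (opX : fam X) (t : R) (f : Cfun opX) : Cfun opX :=
  exist _ (fun x => t * proj1_sig f x) (cont_comp opX _ (fun y => t * y) (proj2_sig f) (u_scale t)).

Definition zero_on {X : Type} {opX : fam X} (Ks : list (set X)) (f : Cfun opX) :=
  forall K, In K Ks -> forall x, K x -> proj1_sig f x = 0.

Lemma co_list {X : Type} (opX : fam X) (z0 : Cfun opX) (Hz : forall x, proj1_sig z0 x = 0) (l : list (set (Cfun opX))) :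
  (forall A, In A l -> exists (K : set X) (V : set R),
    compact opX K /\ R_open V /\
    A = (fun f : Cfun opX => forall x, K x -> V (proj1_sig f x))) ->
  (forall A, In A l -> A z0) ->
  exists Ks, (forall K, In K Ks -> compact opX K) /\
    forall f, zero_on Ks f -> forall A, In A l -> A f.
Proof.
  induction l as [|A l IH]; intros H1 H2.
  - exists nil. split; simpl; tauto.
  - destruct IH as [Ks [HK HF]]; [intros; apply H1; simpl; auto|intros; apply H2; simpl; auto|].
    destruct (H1 A (or_introl eq_refl)) as [K [V [HKc [HV ->]]]].
    exists (K :: Ks). split.
    + intros K' [<-|HK']; auto.
    + intros f Hf A' [<-|HA'].
      * intros x Kx. rewrite (Hf K (or_introl eq_refl) x Kx).
        pose proof (H2 _ (or_introl eq_refl) x Kx) as H. rewrite Hz in H. exact H.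
      * apply HF; auto. intros K' HK' y Hy. apply (Hf K'); simpl; auto.
Qed.

Lemma R_open_ball : R_open (fun y => Rabs y < 1).
Proof.
  intros x Hx. exists (1 - Rabs x). split. lra.
  intros y Hy. replace y with ((y - x) + x) by ring.
  pose proof (Rabs_triang (y - x) x). lra.
Qed.

Lemma support {X : Type} (opX : fam X) (Ht : is_topology opX) (phi : Cfun opX -> R) :
  in_dual phi -> exists Ks, (forall K, In K Ks -> compact opX K) /\
     forall f, zero_on Ks f -> phi f = 0.
Proof.
  intros [[Hadd Hsc] Hc].
  set (z0 := zeroC opX Ht).
  assert (H0 : phi z0 = 0).
  { rewrite (Hsc 0 z0 z0). ring. intros x. simpl. ring. }
  pose proof (Hc _ R_open_ball) as Ho.
  destruct (Ho z0) as [l [Hl1 [Hl2 Hl3]]]. simpl. rewrite H0, Rabs_R0. lra.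
  destruct (co_list opX z0 (fun x => eq_refl) l Hl1 Hl2) as [Ks [HK HF]].
  exists Ks. split; auto.
  intros f Hf. destruct (Req_dec (phi f) 0) as [E|E]; auto. exfalso.
  set (g := scaleC opX (2 / phi f) f).
  assert (Hg : zero_on Ks g).
  { intros K HK' x Kx. simpl. rewrite (Hf K HK' x Kx). ring. }
  pose proof (Hl3 g (HF g Hg)) as Hlt. simpl in Hlt.
  rewrite (Hsc (2 / phi f) f g) in Hlt by (intros; reflexivity).
  replace (2 / phi f * phi f) with 2 in Hlt by (field; auto).
  rewrite Rabs_right in Hlt; lra.
Qed.

Lemma weak_list {X : Type} (opX : fam X) (Ht : is_topology opX) (l : list (set (Cfun opX))) :
  (forall A, In A l -> exists (phi : Cfun opX -> R) (V : set R),
    in_dual phi /\ R_open V /\ A = (fun f => V (phi f))) ->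
  (forall A, In A l -> A (zeroC opX Ht)) ->
  exists Ks, (forall K, In K Ks -> compact opX K) /\
    forall f, zero_on Ks f -> forall A, In A l -> A f.
Proof.
  induction l as [|A l IH]; intros H1 H2.
  - exists nil. split; simpl; tauto.
  - destruct IH as [Ks [HK HF]]; [intros; apply H1; simpl; auto|intros; apply H2; simpl; auto|].
    destruct (H1 A (or_introl eq_refl)) as [phi [V [Hphi [HV ->]]]].
    destruct (support opX Ht phi Hphi) as [Ks2 [HK2 HF2]].
    exists (Ks2 ++ Ks). split.
    + intros K HK'. apply in_app_or in HK'. destruct HK'; auto.
    + intros f Hf A' [<-|HA'].
      * pose proof (H2 _ (or_introl eq_refl)) as Hz. simpl in Hz.
        assert (E1 : phi (zeroC opX Ht) = 0).
        { apply HF2. intros K _ x _. reflexivity. }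
        assert (E2 : phi f = 0).
        { apply HF2. intros K HK' x Kx. apply (Hf K). apply in_or_app; auto. auto. }
        simpl. rewrite E2. rewrite E1 in Hz. exact Hz.
      * apply HF; auto. intros K' HK' y Hy. apply (Hf K'); auto. apply in_or_app; auto.
Qed.

Lemma keyA {X : Type} (opX : fam X) (Ht : is_topology opX) (W : set (Cfun opX)) :
  @weak_top _ opX W -> W (zeroC opX Ht) ->
  exists Ks, (forall K, In K Ks -> compact opX K) /\ forall f, zero_on Ks f -> W f.
Proof.
  intros HW Hz. destruct (HW _ Hz) as [l [H1 [H2 H3]]].
  destruct (weak_list opX Ht l H1 H2) as [Ks [HK HF]].
  exists Ks. split; auto. intros f Hf. apply H3. apply HF; auto.
Qed.

Lemma network {T : Type} (op : fam T) (N : fam T) : k_network op N ->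
  forall x U, op U -> U x -> exists A, N A /\ A x /\ subset A U.
Proof.
  intros Hk x U HU Ux.
  destruct (Hk (fun y => y = x) U) as [l [H1 [H2 H3]]].
  - intros F HF Hc. destruct (Hc x eq_refl) as [V [FV Vx]].
    exists (V :: nil). split. intros W [<-|[]]; auto.
    intros y ->. exists V. simpl; auto.
  - auto.
  - intros y ->. auto.
  - destruct (H2 x eq_refl) as [A [HA Ax]]. exists A. repeat split; auto.
    intros y Ay. apply H3. exists A; auto.
Qed.

Lemma lf_list {T : Type} (op : fam T) (Ht : is_topology op) (z : T) (l : list (set T)) :
  exists W, op W /\ W z /\ forall A, In A l -> ~ closure op A z -> forall g, W g -> ~ A g.
Proof.
  induction l as [|A l [W [HW [Wz HWp]]]].
  - exists (fun _ => True). split; [apply (top_full Ht)|split; [exact I|intros A0 []]].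
  - destruct (classic (closure op A z)) as [Hc|Hc].
    + exists W. split; auto. split; auto. intros A' [<-|HA'] Hn; [contradiction|auto].
    + unfold closure in Hc.
      apply not_all_ex_not in Hc. destruct Hc as [U HU].
      destruct (classic (op U)) as [HoU|HoU]; [|exfalso; apply HU; intros; contradiction].
      destruct (classic (U z)) as [Uz|Uz]; [|exfalso; apply HU; intros; contradiction].
      exists (fun x => U x /\ W x). split. apply (top_inter Ht); auto. split; auto.
      intros A' [<-|HA'] Hn g [Ug Wg] Ag.
      * apply HU. intros _ _. exfalso. apply HU. intros _ _. exists g; auto.
      * exact (HWp A' HA' Hn g Wg Ag).
Qed.

Lemma lf_nbhd {T : Type} (op : fam T) (Ht : is_topology op) (Nf : fam T) (z : T) :
  locally_finite op Nf ->
  exists W, op W /\ W z /\ forall A, Nf A -> ~ closure op A z -> forall g, W g -> ~ A g.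
Proof.
  intros Hlf. destruct (Hlf z) as [U [HU [Uz [l Hl]]]].
  destruct (lf_list op Ht z l) as [W [HW [Wz HWp]]].
  exists (fun x => U x /\ W x). split. apply (top_inter Ht); auto. split; auto.
  intros A HA Hn g [Ug Wg] Ag. apply (HWp A) with g; auto. apply Hl; auto. exists g; auto.
Qed.

Lemma aleph_Gdelta {T : Type} (op : fam T) (z : T) : aleph_space op ->
  exists Wn : nat -> set T, (forall n, op (Wn n)) /\ (forall n, Wn n z) /\
    forall g, (forall n, Wn n g) -> g = z.
Proof.
  intros [Ht [[HT1 Hreg] [N [[Nn [HN Hlf]] Hk]]]].
  pose (Wn := fun n => proj1_sig (cid _ _ (lf_nbhd op Ht (Nn n) z (Hlf n)))).
  assert (HWn : forall n, op (Wn n) /\ Wn n z /\ forall A, Nn n A -> ~ closure op A z -> forall g, Wn n g -> ~ A g).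
  { intros n. exact (proj2_sig (cid _ _ (lf_nbhd op Ht (Nn n) z (Hlf n)))). }
  exists Wn. split; [intros n; apply HWn|]. split; [intros n; apply HWn|].
  intros g Hg. apply NNPP. intros Hne.
  destruct (Hreg g (fun x => ~ x = z) (HT1 z) (fun e => Hne e)) as [V [HV [Vg HVc]]].
  destruct (network op N Hk g V HV Vg) as [A [NA [Ag AV]]].
  destruct (proj1 (HN A) NA) as [n Hn].
  apply (proj2 (proj2 (HWn n)) A Hn) with g; auto.
  intros Hc. apply (HVc z); auto.
  intros U HU Uz. destruct (Hc U HU Uz) as [y [Uy Ay]]. exists y; auto.
Qed.

Definition emptyS {X : Type} : set X := fun _ => False.

Theorem part1 (X : Type) (opX : fam X) :
     tychonoff opX ->
     (forall K : set X, compact opX K -> countable K) ->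
     weakly_aleph opX ->
     separable opX.
Proof.
  intros [Ht [HT1 Hcr]] Hcc Hw.
  set (z0 := zeroC opX Ht).
  destruct (aleph_Gdelta _ z0 Hw) as [Wn [HWo [HWz HWg]]].
  pose (Ks := fun n => proj1_sig (cid _ _ (keyA opX Ht (Wn n) (HWo n) (HWz n)))).
  assert (HKs : forall n, (forall K, In K (Ks n) -> compact opX K) /\
                  forall f, zero_on (Ks n) f -> Wn n f).
  { intros n. exact (proj2_sig (cid _ _ (keyA opX Ht (Wn n) (HWo n) (HWz n)))). }
  exists (fun y => exists n, (fun y => exists i, nth i (Ks n) emptyS y) y).
  split.
  - apply countable_Union. intros n. apply countable_Union. intros i.
    destruct (nth_in_or_default i (Ks n) emptyS) as [Hi|Hi].
    + apply Hcc. apply (proj1 (HKs n)). exact Hi.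
    + rewrite Hi. apply countable_empty. intros x [].
  - intros U HU [x Ux]. apply NNPP. intros Hn.
    assert (HF : closed opX (fun y => ~ U y)).
    { unfold closed. apply op_ext with U; auto. intros y. split; auto. apply NNPP. }
    destruct (Hcr _ x HF (fun H => H Ux)) as [f [Hf [fx Hf1]]].
    set (h := exist (fun g => continuous opX R_open g) (fun y => f y - 1)
                (cont_comp opX f (fun y => y - 1) Hf (u_shift 1)) : Cfun opX).
    assert (Hh : h = z0).
    { apply HWg. intros n. apply (proj2 (HKs n)). intros K HK y Ky. simpl.
      destruct (In_nth _ _ emptyS HK) as [i [_ Hi]].
      rewrite Hf1. ring. intros Uy. apply Hn. exists y. split; auto.
      exists n, i. rewrite Hi. auto. }
    assert (E : proj1_sig h x = proj1_sig z0 x) by (rewrite Hh; reflexivity).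
    simpl in E. lra.
Qed.


Section O.
Variable W : Type.
Variable lt : W -> W -> Prop.
Hypothesis Hw : is_omega1 lt.

Lemma irr : forall x, ~ lt x x. Proof. apply Hw. Qed.
Lemma trs : forall x y z, lt x y -> lt y z -> lt x z. Proof. apply Hw. Qed.
Lemma tri : forall x y, lt x y \/ x = y \/ lt y x. Proof. apply Hw. Qed.
Lemma asy : forall x y, lt x y -> ~ lt y x.
Proof. intros x y H1 H2. apply (irr x). apply trs with y; auto. Qed.

Lemma wf_min (P : W -> Prop) : (exists x, P x) -> exists m, P m /\ forall z, P z -> ~ lt z m.
Proof.
  intros [x Px]. apply NNPP. intros Hn. revert Px.
  induction x as [x IH] using (well_founded_ind (proj1 (proj2 (proj2 (proj2 Hw))))).
  intros Px. apply Hn. exists x. split; auto. intros z Pz Hz. exact (IH z Hz Pz).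
Qed.

Lemma no_max : forall w, exists s, lt w s.
Proof.
  intros w. apply NNPP. intros Hn. apply (proj1 (proj2 (proj2 (proj2 (proj2 Hw))))).
  apply countable_sub with (fun x => x = w \/ lt x w).
  apply countable_addpt. apply Hw.
  intros x _. destruct (tri x w) as [H|[H|H]]; auto. exfalso. apply Hn. exists x; auto.
Qed.

Lemma succ_ex : forall w, exists s, lt w s /\ forall z, lt z s -> z = w \/ lt z w.
Proof.
  intros w. destruct (wf_min (fun s => lt w s) (no_max w)) as [s [Hs Hm]].
  exists s. split; auto. intros z Hz. destruct (tri z w) as [H|[H|H]]; auto.
  exfalso. exact (Hm z H Hz).
Qed.

Definition ot := order_topology lt.

Lemma ray_lt_open a : ot (fun y => lt y a).
Proof.
  intros x Hx. exists ((fun y => lt y a) :: nil). repeat split.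
  - intros A [<-|[]]. exists a. auto.
  - intros A [<-|[]]. auto.
  - intros y Hy. apply Hy. left; auto.
Qed.

Lemma ray_gt_open a : ot (fun y => lt a y).
Proof.
  intros x Hx. exists ((fun y => lt a y) :: nil). repeat split.
  - intros A [<-|[]]. exists a. auto.
  - intros A [<-|[]]. auto.
  - intros y Hy. apply Hy. left; auto.
Qed.

Lemma bound_list (d : W) (l : list (set W)) :
  (forall U, In U l -> exists w, U = (fun y => lt y w)) ->
  exists b, forall U y, In U l -> U y -> lt y b.
Proof.
  induction l as [|U l IH]; intros H.
  - exists d. intros U y [].
  - destruct IH as [b Hb]. intros; apply H; simpl; auto.
    destruct (H U (or_introl eq_refl)) as [w ->].
    destruct (tri w b) as [E|[E|E]].
    + exists b. intros U' y [<-|HU'] Hy. apply trs with w; auto. eauto.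
    + subst. exists b. intros U' y [<-|HU'] Hy; eauto.
    + exists w. intros U' y [<-|HU'] Hy. auto. apply trs with b; eauto.
Qed.

Lemma compact_countable (K : set W) : compact ot K -> countable K.
Proof.
  intros HK. destruct (classic (exists z, K z)) as [[d Kd]|Hn].
  2:{ apply countable_empty. intros x Kx. apply Hn; eauto. }
  destruct (HK (fun U => exists w, U = (fun y => lt y w))) as [l [Hl1 Hl2]].
  - intros U [w ->]. apply ray_lt_open.
  - intros y Ky. destruct (no_max y) as [s Hs]. exists (fun z => lt z s). split; eauto.
  - destruct (bound_list d l Hl1) as [b Hb].
    apply countable_sub with (fun y => lt y b). apply Hw.
    intros y Ky. destruct (Hl2 y Ky) as [U [HU Uy]]. eauto.
Qed.

Lemma not_sep : ~ separable ot.
Proof.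
  intros [D [[g Hg] Hd]].
  assert (Hb : exists b, forall n d, g n = Some d -> lt d b).
  { apply NNPP. intros Hn. apply (proj1 (proj2 (proj2 (proj2 (proj2 Hw))))).
    apply countable_sub with (fun b => exists n, (fun n b => exists d, g n = Some d /\ (b = d \/ lt b d)) n b).
    - apply countable_Union. intros n. destruct (g n) as [d|] eqn:E.
      + apply countable_sub with (fun x => x = d \/ lt x d).
        apply countable_addpt. apply Hw.
        intros x [d' [E' H]]. injection E' as <-. auto.
      + apply countable_empty. intros x [d' [E' _]]. discriminate.
    - intros b _. apply NNPP. intros Hb. apply Hn. exists b. intros n d E.
      destruct (tri d b) as [H|[H|H]]; auto; exfalso; apply Hb; exists n, d; auto. }
  destruct Hb as [b Hb].
  destruct (Hd (fun y => lt b y) (ray_gt_open b)) as [y [Hy Dy]].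
  - destruct (no_max b) as [s Hs]. eauto.
  - destruct (Hg y Dy) as [n Hn]. apply (asy b y); eauto.
Qed.

Lemma ot_T1 : T1 ot.
Proof.
  intros x y Hy. destruct (tri y x) as [H|[H|H]].
  - exists ((fun z => lt z x) :: nil). repeat split.
    + intros A [<-|[]]. exists x. first [left; reflexivity|right; reflexivity].
    + intros A [<-|[]]. auto.
    + intros z Hz E. rewrite E in Hz. apply (irr x). exact (Hz _ (or_introl eq_refl)).
  - contradiction.
  - exists ((fun z => lt x z) :: nil). repeat split.
    + intros A [<-|[]]. exists x. first [left; reflexivity|right; reflexivity].
    + intros A [<-|[]]. auto.
    + intros z Hz E. rewrite E in Hz. apply (irr x). exact (Hz _ (or_introl eq_refl)).
Qed.

Lemma ot_creg : completely_regular ot.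
Proof.
  intros F x HF Fx.
  destruct (HF x Fx) as [l [Hl1 [Hl2 Hl3]]].
  set (C := fun z => (z = x \/ lt z x) /\ forall A a, In A l -> A = (fun y => lt a y) -> lt a z).
  assert (HCF : forall z, C z -> ~ F z).
  { intros z [Hz Hlo]. apply Hl3. intros A HA. destruct (Hl1 A HA) as [a [E|E]].
    - pose proof (Hl2 A HA) as Ax. subst A. destruct Hz as [->|Hz]; auto. apply trs with x; auto.
    - rewrite E. apply (Hlo A a HA E). }
  assert (Cx : C x).
  { split; auto. intros A a HA E. pose proof (Hl2 A HA) as Ax. subst A. exact Ax. }
  set (f := fun z => if excluded_middle_informative (C z) then 0 else 1).
  exists f. split; [|split].
  - intros V HV z Hz. unfold f in Hz. destruct (excluded_middle_informative (C z)) as [Cz|Cz].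
    + destruct (succ_ex x) as [s [Hs Hs2]].
      exists ((fun y => lt y s) :: l). repeat split.
      * intros A [<-|HA]. exists s; left; reflexivity. auto.
      * intros A [<-|HA].
        -- destruct (proj1 Cz) as [->|H]; auto. apply trs with x; auto.
        -- destruct (Hl1 A HA) as [a [E|E]].
           ++ pose proof (Hl2 A HA) as Ax. subst A. destruct (proj1 Cz) as [->|H]; auto. apply trs with x; auto.
           ++ rewrite E. apply (proj2 Cz A a HA E).
      * intros y Hy. assert (Cy : C y).
        { split. apply Hs2. apply Hy. left; auto.
          intros A a HA E. pose proof (Hy A (or_intror HA)) as Ay. subst A. exact Ay. }
        unfold f. destruct (excluded_middle_informative (C y)); [auto|contradiction].
    + assert (Hcase : lt x z \/ exists a, (exists A, In A l /\ A = (fun y => lt a y)) /\ ~ lt a z).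
      { apply NNPP. intros Hn. apply Cz. split.
        - destruct (tri z x) as [H|[H|H]]; auto. exfalso; apply Hn; auto.
        - intros A a HA E. apply NNPP. intros Ha. apply Hn. right. exists a. split; eauto. }
      destruct Hcase as [H|[a [[A0 [HA0 E0]] Ha]]].
      * exists ((fun y => lt x y) :: nil). repeat split.
        -- intros A [<-|[]]. exists x; right; reflexivity.
        -- intros A [<-|[]]. auto.
        -- intros y Hy. assert (~ C y).
           { intros [[E|E] _]; pose proof (Hy _ (or_introl eq_refl)) as Hxy; simpl in Hxy.
             rewrite E in Hxy; apply (irr x); auto. apply (asy x y); auto. }
           unfold f. destruct (excluded_middle_informative (C y)); [contradiction|auto].
      * destruct (succ_ex a) as [s [Hs Hs2]].
        assert (za : lt z s).
        { destruct (tri z a) as [E|[E|E]]. apply trs with a; auto. subst; auto. contradiction. }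
        exists ((fun y => lt y s) :: nil). repeat split.
        -- intros A [<-|[]]. exists s; left; reflexivity.
        -- intros A [<-|[]]. auto.
        -- intros y Hy. assert (~ C y).
           { intros [_ Hlo]. pose proof (Hlo A0 a HA0 E0) as Hay. pose proof (Hy _ (or_introl eq_refl)) as Hys. simpl in Hys.
             destruct (Hs2 y Hys) as [E|E]. rewrite E in Hay. apply (irr a); auto. apply (asy a y); auto. }
           unfold f. destruct (excluded_middle_informative (C y)); [contradiction|auto].
  - unfold f. destruct (excluded_middle_informative (C x)); [auto|contradiction].
  - intros y Fy. unfold f. destruct (excluded_middle_informative (C y)) as [Cy|]; auto.
    exfalso. exact (HCF y Cy Fy).
Qed.

End O.

Theorem lemma6p2 :
  (forall (X : Type) (opX : fam X),
     tychonoff opX ->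
     (forall K : set X, compact opX K -> countable K) ->
     weakly_aleph opX ->
     separable opX) /\
  (forall (W : Type) (lt : W -> W -> Prop),
     is_omega1 lt -> ~ weakly_aleph (order_topology lt)).
Proof.
  split.
  - exact part1.
  - intros W lt Hw Hwa. apply (not_sep W lt Hw).
    apply part1; auto.
    + split. apply generated_top. split. apply ot_T1; auto. apply ot_creg; auto.
    + apply compact_countable; auto.
Qed.
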